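(* Let $n\geq1$ and $\lambda=(\lambda_1,\dots,\lambda_n)\in\mathbb{R}^n$. Then $\sum_{P\in\mathcal{P}_{ord}(\lambda)}(-1)^{|P|}$ equals $(-1)^n$ if $\lambda_r>0$ for all $r\in\{1,\dots,n\}$, and $0$ otherwise.
   Context: An ordered partition of $\{1,\dots,n\}$ is a sequence $P=(I_1,\dots,I_k)$ of nonempty pairwise disjoint subsets with union $\{1,\dots,n\}$, and $|P|=k$. For $J\subset\{1,\dots,n\}$, $s_J(\lambda)=\sum_{i\in J}\lambda_i$. $\mathcal{P}_{ord}(\lambda)$ is the set of ordered partitions $P=(I_1,\dots,I_k)$ such that $s_{I_1}(\lambda)+\dots+s_{I_i}(\lambda)>0$ for all $i\in\{1,\dots,k\}$. *)

(* Defs.v *)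
From mathcomp Require Import all_boot all_order all_algebra.
Set Implicit Arguments. Unset Strict Implicit. Unset Printing Implicit Defensive.
Import Order.TTheory GRing.Theory Num.Theory.
Local Open Scope ring_scope.

(* An ordered partition of {1..n} (here 'I_n) with k blocks is represented as a
   finite function P : 'I_k -> {set 'I_n}, P = (I_1,...,I_k). *)
Definition is_ord_partition (n k : nat) (P : {ffun 'I_k -> {set 'I_n}}) : bool :=
  [forall i, P i != set0]
  && [forall i, forall j, (i != j) ==> [disjoint P i & P j]]
  && (\bigcup_(i < k) P i == [set: 'I_n]).

Definition sJ (R : numDomainType) (n : nat) (lam : 'I_n -> R) (J : {set 'I_n}) : R :=
  \sum_(r in J) lam r.

Definition in_Pord (R : numDomainType) (n k : nat) (lam : 'I_n -> R)
  (P : {ffun 'I_k -> {set 'I_n}}) : bool :=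
  is_ord_partition P &&
  [forall i : 'I_k, 0 < \sum_(j : 'I_k | (j <= i)%N) sJ lam (P j)].

(* sum_{P in P_ord(lambda)} (-1)^{|P|}; an ordered partition of an n-set has
   between 1 and n blocks (k = 0 gives no partition when n >= 1). *)
Definition Pord_signed_count (R : numDomainType) (n : nat) (lam : 'I_n -> R) : int :=
  \sum_(k < n.+1) \sum_(P : {ffun 'I_k -> {set 'I_n}} | in_Pord lam P) (-1) ^+ k.

(* Main.v *)
Require Import Defs.
Set Warnings "-all".
From mathcomp Require Import all_boot all_order all_algebra.
From mathcomp Require Import ring lra.
Import Order.TTheory GRing.Theory Num.Theory.
Set Implicit Arguments. Unset Strict Implicit. Unset Printing Implicit Defensive.
Local Open Scope ring_scope.

Lemma forall_ordS k (p : pred 'I_k.+1) :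
  [forall i, p i] = [forall j : 'I_k, p (lift ord_max j)] && p ord_max.
Proof.
apply/forallP/andP => [H|[/forallP H1 H2] i].
  by split; [apply/forallP => j|]; apply: H.
by case: (unliftP ord_max i) => [j ->|->].
Qed.

Lemma alt_subset_sum (T : finType) (A : {set T}) :
  \sum_(B : {set T} | B \subset A) (-1) ^+ #|B| = (A == set0)%:R :> int.
Proof.
have [->|/set0Pn [a aA]] := eqVneq A set0.
  rewrite (big_pred1 set0) ?cards0 ?expr0 //.
  by move=> B; rewrite /= subset0.
rewrite (bigID (fun B : {set T} => a \in B)) /=.
rewrite (reindex_onto (fun B => a |: B) (fun B => B :\ a)) /=; last first.
  by move=> B /andP[_ aB]; rewrite setD1K.
rewrite -[RHS](subrr (\sum_(B : {set T} | (B \subset A) && (a \notin B)) (-1) ^+ #|B| : int)).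
rewrite addrC; congr (_ + _).
rewrite -sumrN; apply: eq_big => B.
  rewrite setU11 andbT subUset sub1set aA /=.
  apply/andP/andP => [[sBA /eqP hB]|[sBA aB]].
    by split=> //; rewrite -hB !inE eqxx.
  split=> //; apply/eqP/setP => x; rewrite !inE.
  by case: (eqVneq x a) => [->|]; [rewrite (negPf aB)|].
move=> /andP[_ /eqP hB].
have aB : a \notin B by rewrite -hB !inE eqxx.
by rewrite cardsU1 aB exprD expr1 mulN1r.
Qed.

Section Main.
Variable R : realDomainType.
Variable n : nat.
Variable lam : 'I_n -> R.

Definition goodP k (S : {set 'I_n}) (P : {ffun 'I_k -> {set 'I_n}}) : bool :=
  [forall i, P i != set0]
  && [forall i, forall j, (i != j) ==> [disjoint P i & P j]]
  && (\bigcup_(i < k) P i == S)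
  && [forall i : 'I_k, 0 < \sum_(j : 'I_k | (j <= i)%N) sJ lam (P j)].

Definition G k S : int := \sum_(P : {ffun 'I_k -> {set 'I_n}} | goodP S P) (-1) ^+ k.

Definition ext k (QJ : {ffun 'I_k -> {set 'I_n}} * {set 'I_n}) : {ffun 'I_k.+1 -> {set 'I_n}} :=
  [ffun i => if unlift ord_max i is Some j then QJ.1 j else QJ.2].
Definition res k (P : {ffun 'I_k.+1 -> {set 'I_n}}) :=
  ([ffun j => P (lift ord_max j)], P ord_max).

Lemma ext_bij k : bijective (@ext k).
Proof.
exists (@res k).
  case=> Q J; rewrite /res /ext /=; congr pair.
    by apply/ffunP=> j; rewrite !ffunE liftK.
  by rewrite ffunE unlift_none.
move=> P; apply/ffunP => i; rewrite ffunE.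
by case: unliftP => [j ->|->]; rewrite /= ?ffunE.
Qed.

Lemma ext_lift k Q J (j : 'I_k) : ext (Q, J) (lift ord_max j) = Q j.
Proof. by rewrite ffunE liftK. Qed.
Lemma ext_max k Q J : ext (k:=k) (Q, J) ord_max = J.
Proof. by rewrite ffunE unlift_none. Qed.

Lemma widen_lift k (j : 'I_k) : widen_ord (leqnSn k) j = lift ord_max j.
Proof. by apply: val_inj; rewrite /= /bump leqNgt ltn_ord. Qed.

Lemma cupE k Q J : \bigcup_(i < k.+1) ext (Q, J) i = (\bigcup_(j < k) Q j) :|: J.
Proof.
rewrite big_ord_recr /= ext_max; congr (_ :|: _).
by apply: eq_bigr => j _; rewrite widen_lift ext_lift.
Qed.

Lemma sumE k Q J (i : 'I_k) :
  \sum_(j : 'I_k.+1 | (j <= lift ord_max i)%N) sJ lam (ext (Q, J) j)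
  = \sum_(j : 'I_k | (j <= i)%N) sJ lam (Q j).
Proof.
rewrite big_mkcond big_ord_recr [RHS]big_mkcond.
rewrite lift_max /= leqNgt ltn_ord /= addr0.
by apply: eq_bigr => j _; rewrite widen_lift ext_lift.
Qed.

Lemma sumMax k Q J :
  \sum_(j : 'I_k.+1 | (j <= @ord_max k)%N) sJ lam (ext (Q, J) j)
  = \sum_(j < k) sJ lam (Q j) + sJ lam J.
Proof.
rewrite big_mkcond big_ord_recr /= leqnn ext_max; congr (_ + _).
by apply: eq_bigr => j _; rewrite widen_lift ext_lift ltnW.
Qed.

Lemma sJU k (Q : {ffun 'I_k -> {set 'I_n}}) :
  (forall i j, i != j -> [disjoint Q i & Q j]) ->
  \sum_(j < k) sJ lam (Q j) = sJ lam (\bigcup_(j < k) Q j).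
Proof. by move=> dQ; rewrite /sJ partition_disjoint_bigcup. Qed.

Lemma sJU2 (A B : {set 'I_n}) : [disjoint A & B] -> sJ lam (A :|: B) = sJ lam A + sJ lam B.
Proof.
move=> dAB; rewrite /sJ -bigU //; apply: eq_bigl => r; by rewrite !inE.
Qed.


Lemma goodP_ext k S Q J :
  goodP S (@ext k (Q, J)) =
  [&& J != set0, J \subset S, 0 < sJ lam S & goodP (S :\: J) Q].
Proof.
set U := \bigcup_(j < k) Q j.
rewrite /goodP cupE -/U.
apply/idP/idP.
  move=> /andP[/andP[/andP[/forallP ne /forallP dj] /eqP cS] /forallP pf].
  have neQ j : Q j != set0 by have := ne (lift ord_max j); rewrite ext_lift.
  have neJ : J != set0 by have := ne ord_max; rewrite ext_max.
  have djQ i j : i != j -> [disjoint Q i & Q j].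
    move=> ij; have := dj (lift ord_max i) => /forallP/(_ (lift ord_max j)).
    by rewrite !ext_lift (inj_eq (@lift_inj _ _)) ij.
  have djQJ j : [disjoint Q j & J].
    have := dj (lift ord_max j) => /forallP/(_ ord_max).
    by rewrite ext_lift ext_max eq_sym neq_lift.
  have djUJ : [disjoint U & J].
    rewrite disjoints_subset; apply/bigcupsP => j _.
    by rewrite -disjoints_subset.
  have UE : U = S :\: J by rewrite -cS setDUl setDv setU0 (setDidPl djUJ).
  rewrite neJ -UE eqxx andbT -cS subsetUr /=.
  apply/andP; split.
    have := pf ord_max; rewrite sumMax sJU // -/U sJU2 //.
  apply/andP; split.
    apply/andP; split; apply/forallP => i; first exact: neQ.
    by apply/forallP => j; apply/implyP; apply: djQ.
  by apply/forallP => i; have := pf (lift ord_max i); rewrite sumE.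
move=> /and4P[neJ sJS pS /andP[/andP[/andP[/forallP neQ /forallP dj] /eqP UE] /forallP pf]].
have djQ i j : i != j -> [disjoint Q i & Q j].
  by move=> ij; have := dj i => /forallP/(_ j); rewrite ij.
have djQJ j : [disjoint Q j & J].
  rewrite disjoints_subset; apply: (subset_trans (bigcup_sup j isT)).
  by rewrite -/U UE; apply/subsetP => x; rewrite !inE => /andP[].
have cS : U :|: J = S.
  apply/setP => x; rewrite !inE UE !inE.
  case: (boolP (x \in J)) => xJ /=; last by rewrite orbF.
  by rewrite (subsetP sJS _ xJ).
rewrite cS eqxx andbT; apply/andP; split.
  apply/andP; split.
    rewrite forall_ordS ext_max neJ andbT.
    by apply/forallP => j; rewrite ext_lift.
  rewrite forall_ordS; apply/andP; split.
    apply/forallP => i; rewrite forall_ordS ext_lift ext_max; apply/andP; split.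
      apply/forallP => j; rewrite ext_lift (inj_eq (@lift_inj _ _)).
      by apply/implyP; apply: djQ.
    by rewrite eq_sym neq_lift djQJ.
  rewrite forall_ordS eqxx /= andbT ext_max; apply/forallP => j.
  by rewrite ext_lift neq_lift disjoint_sym djQJ.
have djUJ : [disjoint U & J].
  by rewrite disjoints_subset; apply/bigcupsP => j _; rewrite -disjoints_subset.
rewrite forall_ordS sumMax sJU // -/U -sJU2 // cS pS andbT.
by apply/forallP => i; rewrite sumE.
Qed.


Lemma G_rec k S :
  G k.+1 S = - ((0 < sJ lam S)%R)%:R *
     \sum_(J : {set 'I_n} | (J != set0) && (J \subset S)) G k (S :\: J).
Proof.
rewrite /G (reindex (@ext k)) /=; last by apply: onW_bij; apply: ext_bij.
rewrite big_mkcond /=.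
transitivity (\sum_(Q : {ffun 'I_k -> {set 'I_n}}) \sum_(J : {set 'I_n})
   (if goodP S (ext (Q, J)) then (-1) ^+ k.+1 else 0 : int)).
  by rewrite pair_big; apply: eq_big => // -[Q J].
rewrite exchange_big mulr_sumr [RHS]big_mkcond /=; apply: eq_bigr => J _.
case: (boolP (J != set0)) => neJ /=; last first.
  by apply: big1 => Q _; rewrite goodP_ext (negPf neJ).
case: (boolP (J \subset S)) => sJS /=; last first.
  by apply: big1 => Q _; rewrite goodP_ext neJ (negPf sJS).
case: (boolP (0 < sJ lam S)) => pS /=; last first.
  by rewrite mulr0n oppr0 mul0r; apply: big1 => Q _; rewrite goodP_ext neJ sJS (negPf pS).
rewrite mulr1n mulN1r -sumrN [RHS]big_mkcond /=; apply: eq_bigr => Q _.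
rewrite goodP_ext neJ sJS pS /=.
by case: goodP; rewrite ?oppr0 // exprS mulN1r.
Qed.


Lemma cardD_lt (S J : {set 'I_n}) : J != set0 -> J \subset S -> (#|S :\: J| < #|S|)%N.
Proof.
move=> /set0Pn[x xJ] sJS.
have xS : x \in S by apply: (subsetP sJS).
apply: (@leq_ltn_trans #|S :\ x|); last exact: proper_card (properD1 xS).
apply: subset_leq_card; apply/subsetP => y; rewrite !inE => /andP[yJ ->].
by rewrite andbT; apply: contraNneq yJ => ->.
Qed.

Lemma G_big k (S : {set 'I_n}) : (#|S| < k)%N -> G k S = 0.
Proof.
elim: k S => [//|k IH] S hS.
rewrite G_rec big1 ?mulr0 // => J /andP[neJ sJS].
by apply: IH; apply: leq_trans (cardD_lt neJ sJS) _.
Qed.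

Lemma G0 (S : {set 'I_n}) : G 0 S = (S == set0)%:R.
Proof.
rewrite /G.
have gE (P : {ffun 'I_0 -> {set 'I_n}}) : goodP S P = (set0 == S).
  rewrite /goodP big_ord0.
  have -> : [forall i : 'I_0, P i != set0] by apply/forallP => -[].
  have -> : [forall i : 'I_0, forall j, (i != j) ==> [disjoint P i & P j]] by apply/forallP => -[].
  have -> : [forall i : 'I_0, 0 < \sum_(j : 'I_0 | (j <= i)%N) sJ lam (P j)] by apply/forallP => -[].
  by rewrite andbT.
rewrite (eq_bigl _ _ gE) eq_sym.
case: eqP => [_|_]; last by rewrite big_pred0.
rewrite (big_pred1 [ffun=> set0]) ?expr0 // => P /=.
by symmetry; apply/eqP/ffunP => -[].
Qed.


Lemma compl_sum (F : {set 'I_n} -> int) (S : {set 'I_n}) :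
  \sum_(J : {set 'I_n} | (J != set0) && (J \subset S)) F (S :\: J) =
  \sum_(T : {set 'I_n} | (T \subset S) && (T != S)) F T.
Proof.
rewrite [RHS](reindex_onto (fun J : {set 'I_n} => S :\: J) (fun T : {set 'I_n} => S :\: T)) /=; last first.
  move=> T /andP[sTS _]; rewrite setDDr setDv set0U; exact/setIidPr.
apply: eq_bigl => J.
rewrite setDDr setDv set0U subsetDl /=.
case: (boolP (J \subset S)) => sJS.
  rewrite (setIidPr sJS) eqxx andbT andbT.
  case: (eqVneq J set0) => [->|neJ]; first by rewrite setD0 eqxx.
  apply/esym/negP => /eqP eSJ; case/set0Pn: neJ => x xJ.
  have : x \in S :\: J by rewrite eSJ (subsetP sJS).
  by rewrite inE xJ.
have -> : (S :&: J == J) = false.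
  by apply/negbTE; apply: contra sJS => /eqP <-; exact: subsetIl.
by rewrite !andbF.
Qed.

Definition Pos : {set 'I_n} := [set r | 0 < lam r].
Definition Hf (S : {set 'I_n}) : int := \sum_(k < n.+1) G k S.

Lemma Hf_formula S : Hf S = (S \subset Pos)%:R * (-1) ^+ #|S|.
Proof.
have [m] := ubnP #|S|; elim: m S => // m IH S ltSm.
have leSn : (#|S| <= n)%N by rewrite -[X in (_ <= X)%N]card_ord max_card.
rewrite /Hf big_ord_recl G0.
under eq_bigr => k _ do rewrite lift0 G_rec.
rewrite -mulr_sumr exchange_big /=.
rewrite (eq_bigr (fun J => Hf (S :\: J))); last first.
  move=> J /andP[neJ sJS]; rewrite /Hf big_ord_recr /= G_big ?addr0 //.
  exact: leq_trans (cardD_lt neJ sJS) leSn.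
rewrite (eq_bigr (fun J => ((S :\: J) \subset Pos)%:R * (-1) ^+ #|S :\: J|)); last first.
  move=> J /andP[neJ sJS]; apply: IH.
  by apply: leq_trans (cardD_lt neJ sJS) _.
rewrite (compl_sum (fun T => (T \subset Pos)%:R * (-1) ^+ #|T|)).
have E : \sum_(T : {set 'I_n} | T \subset S) ((T \subset Pos)%:R * (-1) ^+ #|T| : int) =
         ((S :&: Pos) == set0)%:R.
  rewrite -alt_subset_sum [RHS](eq_bigl (fun T : {set 'I_n} => (T \subset S) && (T \subset Pos))); last first.
    by move=> T; rewrite subsetI.
  rewrite [RHS]big_mkcondr /=; apply: eq_bigr => T _.
  by case: (T \subset Pos); rewrite ?mul1r ?mul0r.
move: E; rewrite (bigD1 S) //= => E.
have -> : \sum_(T : {set 'I_n} | (T \subset S) && (T != S)) ((T \subset Pos)%:R * (-1) ^+ #|T| : int)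
   = ((S :&: Pos) == set0)%:R - (S \subset Pos)%:R * (-1) ^+ #|S|.
  by rewrite -E addrC addrK.
clear E IH.
have [->|neS] := eqVneq S set0.
  by rewrite /sJ big_set0 ltxx sub0set cards0 /=; ring.
have [x xS] := set0Pn _ neS.
case: (boolP (S \subset Pos)) => sP.
  have pS : (0 < sJ lam S)%R.
    have lx : 0 < lam x by have := subsetP sP x xS; rewrite inE.
    have ge : 0 <= \sum_(r in S | r != x) lam r.
      by apply: sumr_ge0 => r /andP[rS _]; have := subsetP sP r rS; rewrite inE => /ltW.
    rewrite /sJ (bigD1 x) //=; lra.
  by rewrite pS (setIidPl sP) (negPf neS) /=; ring.
rewrite /= mul0r; case: (eqVneq (S :&: Pos) set0) => [SP0|neSP].
  have nS : (0 < sJ lam S)%R = false.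
    apply/negbTE; rewrite -leNgt; apply: sumr_le0 => r rS.
    have : r \notin S :&: Pos by rewrite SP0 inE.
    by rewrite !inE rS /= -leNgt.
  by rewrite nS /=; ring.
by rewrite /=; ring.
Qed.

End Main.

From mathcomp Require Import all_classical all_reals.
Import Order.TTheory GRing.Theory Num.Theory.
Local Open Scope ring_scope.

Theorem mainTheorem5 (R : realType) (n : nat) (hn : (1 <= n)%N) (lam : 'I_n -> R) :
  Pord_signed_count lam =
    (if [forall r, 0 < lam r] then (-1) ^+ n else 0).
Proof.
have -> : Pord_signed_count lam = Hf lam [set: 'I_n]%SET by [].
rewrite Hf_formula cardsT card_ord.
have -> : ([set: 'I_n]%SET \subset Pos lam) = [forall r, 0 < lam r].
  apply/fintype.subsetP/forallP => H r; first by have := H r (finset.in_setT r); rewrite inE.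
  by move=> _; rewrite inE; apply: H.
by case: forallP => _; rewrite /= ?mul1r ?mul0r.
Qed.
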